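(* A cartesian bicategory $\mathcal{C}$ is functionally complete if and only if the elementary and existential doctrine $\mathcal{C}[-,I]:\mathsf{Map}(\mathcal{C})^{op}\to\mathsf{InfSl}$ has full comprehensions.
   Context: Composition in diagrammatic order. A cartesian bicategory is a poset-enriched symmetric monoidal category $(\mathcal{C},\otimes,I)$ with, for each $X$, commutative comonoid $(\mathrm{copy}_X,\mathrm{disc}_X)$ and monoid $(\mathrm{cocopy}_X,\mathrm{codisc}_X)$ forming special Frobenius bimonoids, comonoid left adjoint to monoid, every arrow $c$ satisfying $c;\mathrm{copy}\le\mathrm{copy};(c\otimes c)$ and $c;\mathrm{disc}\le\mathrm{disc}$, and standard coherence. A map is an arrow $f$ with $f;\mathrm{copy}=\mathrm{copy};(f\otimes f)$ and $f;\mathrm{disc}=\mathrm{disc}$; maps form a category $\mathsf{Map}(\mathcal{C})$ with finite products. The converse of $c:X\to Y$ is $c^\dagger=(\mathrm{id}_Y\otimes(\mathrm{codisc}_X;\mathrm{copy}_X));(\mathrm{id}_Y\otimes c\otimes\mathrm{id}_X);((\mathrm{cocopy}_Y;\mathrm{disc}_Y)\otimes\mathrm{id}_X):Y\to X$. The functor $\mathcal{C}[-,I]$ sends $X$ to $\mathcal{C}[X,I]$ and a map $f$ to $c\mapsto f;c$; it is an elementary and existential doctrine. $\mathcal{C}$ is functionally complete if for every $r:X\to I$ there is a map $i:X_r\to X$ (a tabulation of $r$) with $i;i^\dagger=\mathrm{id}_{X_r}$ and $i^\dagger;\mathrm{disc}_{X_r}=r$. For a doctrine $P:\mathcal{C}^{op}\to\mathsf{InfSl}$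 and $\alpha\in P(X)$, a comprehension of $\alpha$ is an arrow $\{\alpha\}:X_\alpha\to X$ with $P_{\{\alpha\}}(\alpha)=\top$ such that every $f:Y\to X$ with $P_f(\alpha)=\top_Y$ factors uniquely as $f=g;\{\alpha\}$. $P$ has full comprehensions if every element has a comprehension and $\alpha\le\beta$ whenever $\{\alpha\}$ factors through $\{\beta\}$. *)

(* Defs.v *)
Declare Scope cb_scope.
Open Scope cb_scope.

(* Poset-enriched symmetric monoidal category.  Composition is written in
   diagrammatic order: [comp f g] = f ; g. *)
Record PSMC := {
  ob : Type;
  hom : ob -> ob -> Type;
  le : forall {X Y : ob}, hom X Y -> hom X Y -> Prop;
  le_refl : forall X Y (f : hom X Y), le f f;
  le_trans : forall X Y (f g h : hom X Y), le f g -> le g h -> le f h;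
  le_antisym : forall X Y (f g : hom X Y), le f g -> le g f -> f = g;
  idm : forall X, hom X X;
  comp : forall {X Y Z : ob}, hom X Y -> hom Y Z -> hom X Z;
  comp_idl : forall X Y (f : hom X Y), comp (idm X) f = f;
  comp_idr : forall X Y (f : hom X Y), comp f (idm Y) = f;
  comp_assoc : forall X Y Z W (f : hom X Y) (g : hom Y Z) (h : hom Z W),
      comp (comp f g) h = comp f (comp g h);
  comp_mono : forall X Y Z (f f' : hom X Y) (g g' : hom Y Z),
      le f f' -> le g g' -> le (comp f g) (comp f' g');
  tens : ob -> ob -> ob;
  unit : ob;
  tensh : forall {X Y X' Y' : ob}, hom X Y -> hom X' Y' -> hom (tens X X') (tens Y Y');
  tensh_id : forall X Y, tensh (idm X) (idm Y) = idm (tens X Y);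
  tensh_comp : forall X Y Z X' Y' Z' (f : hom X Y) (g : hom Y Z)
      (f' : hom X' Y') (g' : hom Y' Z'),
      tensh (comp f g) (comp f' g') = comp (tensh f f') (tensh g g');
  tensh_mono : forall X Y X' Y' (f g : hom X Y) (f' g' : hom X' Y'),
      le f g -> le f' g' -> le (tensh f f') (tensh g g');
  assoc : forall X Y Z, hom (tens (tens X Y) Z) (tens X (tens Y Z));
  assoc_inv : forall X Y Z, hom (tens X (tens Y Z)) (tens (tens X Y) Z);
  assoc_iso1 : forall X Y Z, comp (assoc X Y Z) (assoc_inv X Y Z) = idm _;
  assoc_iso2 : forall X Y Z, comp (assoc_inv X Y Z) (assoc X Y Z) = idm _;
  assoc_nat : forall X Y Z X' Y' Z' (f : hom X X') (g : hom Y Y') (h : hom Z Z'),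
      comp (tensh (tensh f g) h) (assoc X' Y' Z')
      = comp (assoc X Y Z) (tensh f (tensh g h));
  lunit : forall X, hom (tens unit X) X;
  lunit_inv : forall X, hom X (tens unit X);
  lunit_iso1 : forall X, comp (lunit X) (lunit_inv X) = idm _;
  lunit_iso2 : forall X, comp (lunit_inv X) (lunit X) = idm _;
  lunit_nat : forall X Y (f : hom X Y),
      comp (tensh (idm unit) f) (lunit Y) = comp (lunit X) f;
  runit : forall X, hom (tens X unit) X;
  runit_inv : forall X, hom X (tens X unit);
  runit_iso1 : forall X, comp (runit X) (runit_inv X) = idm _;
  runit_iso2 : forall X, comp (runit_inv X) (runit X) = idm _;
  runit_nat : forall X Y (f : hom X Y),
      comp (tensh f (idm unit)) (runit Y) = comp (runit X) f;
  sym : forall X Y, hom (tens X Y) (tens Y X);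
  sym_inv : forall X Y, comp (sym X Y) (sym Y X) = idm _;
  sym_nat : forall X Y X' Y' (f : hom X X') (g : hom Y Y'),
      comp (tensh f g) (sym X' Y') = comp (sym X Y) (tensh g f);
  pentagon : forall W X Y Z,
      comp (assoc (tens W X) Y Z) (assoc W X (tens Y Z))
      = comp (comp (tensh (assoc W X Y) (idm Z)) (assoc W (tens X Y) Z))
             (tensh (idm W) (assoc X Y Z));
  triangle : forall X Y,
      comp (assoc X unit Y) (tensh (idm X) (lunit Y)) = tensh (runit X) (idm Y);
  hexagon : forall X Y Z,
      comp (comp (assoc X Y Z) (sym X (tens Y Z))) (assoc Y Z X)
      = comp (comp (tensh (sym X Y) (idm Z)) (assoc Y X Z)) (tensh (idm Y) (sym X Z))
}.

Arguments le {p X Y}.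
Arguments comp {p X Y Z}.
Arguments tensh {p X Y X' Y'}.
Arguments idm {p}.
Arguments tens {p}.
Arguments unit {p}.
Arguments assoc {p}.
Arguments assoc_inv {p}.
Arguments lunit {p}.
Arguments lunit_inv {p}.
Arguments runit {p}.
Arguments runit_inv {p}.
Arguments sym {p}.

Notation "f ;; g" := (comp f g) (at level 50, left associativity) : cb_scope.
Notation "f ** g" := (tensh f g) (at level 40, left associativity) : cb_scope.
Notation "X (x) Y" := (tens X Y) (at level 40, left associativity) : cb_scope.

Definition mid (C : PSMC) (X Y : ob C) :
  hom C ((X (x) X) (x) (Y (x) Y)) ((X (x) Y) (x) (X (x) Y)) :=
  assoc X X (Y (x) Y)
  ;; (idm X ** assoc_inv X Y Y)
  ;; (idm X ** (sym X Y ** idm Y))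
  ;; (idm X ** assoc Y X Y)
  ;; assoc_inv X Y (X (x) Y).

Definition midinv (C : PSMC) (X Y : ob C) :
  hom C ((X (x) Y) (x) (X (x) Y)) ((X (x) X) (x) (Y (x) Y)) :=
  assoc X Y (X (x) Y)
  ;; (idm X ** assoc_inv Y X Y)
  ;; (idm X ** (sym Y X ** idm Y))
  ;; (idm X ** assoc X Y Y)
  ;; assoc_inv X X (Y (x) Y).

Record CartBicat := {
  base :> PSMC;
  copy : forall X : ob base, hom base X (X (x) X);
  disc : forall X : ob base, hom base X unit;
  cocopy : forall X : ob base, hom base (X (x) X) X;
  codisc : forall X : ob base, hom base unit X;
  copy_coassoc : forall X, copy X ;; (copy X ** idm X) ;; assoc X X X
                           = copy X ;; (idm X ** copy X);
  copy_counitl : forall X, copy X ;; (disc X ** idm X) ;; lunit X = idm X;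
  copy_counitr : forall X, copy X ;; (idm X ** disc X) ;; runit X = idm X;
  copy_comm : forall X, copy X ;; sym X X = copy X;
  cocopy_assoc : forall X, (cocopy X ** idm X) ;; cocopy X
                           = assoc X X X ;; (idm X ** cocopy X) ;; cocopy X;
  cocopy_unitl : forall X, lunit_inv X ;; (codisc X ** idm X) ;; cocopy X = idm X;
  cocopy_unitr : forall X, runit_inv X ;; (idm X ** codisc X) ;; cocopy X = idm X;
  cocopy_comm : forall X, sym X X ;; cocopy X = cocopy X;
  frobenius1 : forall X, (copy X ** idm X) ;; assoc X X X ;; (idm X ** cocopy X)
                         = cocopy X ;; copy X;
  frobenius2 : forall X, (idm X ** copy X) ;; assoc_inv X X X ;; (cocopy X ** idm X)
                         = cocopy X ;; copy X;
  special : forall X, copy X ;; cocopy X = idm X;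
  adj_copy_unit : forall X, le (idm X) (copy X ;; cocopy X);
  adj_copy_counit : forall X, le (cocopy X ;; copy X) (idm (X (x) X));
  adj_disc_unit : forall X, le (idm X) (disc X ;; codisc X);
  adj_disc_counit : forall X, le (codisc X ;; disc X) (idm unit);
  lax_copy : forall X Y (c : hom base X Y), le (c ;; copy Y) (copy X ;; (c ** c));
  lax_disc : forall X Y (c : hom base X Y), le (c ;; disc Y) (disc X);
  copy_tens : forall X Y, copy (X (x) Y) = (copy X ** copy Y) ;; mid base X Y;
  disc_tens : forall X Y, disc (X (x) Y) = (disc X ** disc Y) ;; lunit unit;
  copy_unit : copy unit = lunit_inv unit;
  disc_unit : disc unit = idm unit;
  cocopy_tens : forall X Y, cocopy (X (x) Y) = midinv base X Y ;; (cocopy X ** cocopy Y);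
  codisc_tens : forall X Y, codisc (X (x) Y) = lunit_inv unit ;; (codisc X ** codisc Y);
  cocopy_unit : cocopy unit = lunit unit;
  codisc_unit : codisc unit = idm unit
}.

Arguments copy {c0}.
Arguments disc {c0}.
Arguments cocopy {c0}.
Arguments codisc {c0}.

Definition is_map {C : CartBicat} {X Y : ob C} (f : hom C X Y) : Prop :=
  f ;; copy Y = copy X ;; (f ** f) /\ f ;; disc Y = disc X.

Definition converse {C : CartBicat} {X Y : ob C} (c : hom C X Y) : hom C Y X :=
  runit_inv Y
  ;; (idm Y ** (codisc X ;; copy X))
  ;; assoc_inv Y X X
  ;; ((idm Y ** c) ** idm X)
  ;; ((cocopy Y ;; disc Y) ** idm X)
  ;; lunit X.

Definition functionally_complete (C : CartBicat) : Prop :=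
  forall (X : ob C) (r : hom C X unit),
    exists (Xr : ob C) (i : hom C Xr X),
      is_map i /\ i ;; converse i = idm Xr /\ converse i ;; disc Xr = r.

(* The doctrine P = C[-,I] on Map(C): P(X) = hom X I ordered by le,
   P_f(a) = f ;; a.  "a is the top element of P(Y)": *)
Definition is_top {C : CartBicat} {Y : ob C} (a : hom C Y unit) : Prop :=
  forall c : hom C Y unit, le c a.

Definition is_comprehension {C : CartBicat} {X : ob C} (a : hom C X unit)
    {Xa : ob C} (i : hom C Xa X) : Prop :=
  is_map i /\ is_top (i ;; a) /\
  forall (Y : ob C) (f : hom C Y X), is_map f -> is_top (f ;; a) ->
    (exists g : hom C Y Xa, is_map g /\ f = g ;; i) /\
    (forall g g' : hom C Y Xa, is_map g -> is_map g' ->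
        f = g ;; i -> f = g' ;; i -> g = g').

Definition has_full_comprehensions (C : CartBicat) : Prop :=
  (forall (X : ob C) (a : hom C X unit),
      exists (Xa : ob C) (i : hom C Xa X), is_comprehension a i) /\
  (forall (X : ob C) (a b : hom C X unit) (Xa Xb : ob C)
          (i : hom C Xa X) (j : hom C Xb X),
      is_comprehension a i -> is_comprehension b j ->
      (exists g : hom C Xa Xb, is_map g /\ i = g ;; j) -> le a b).

(* Main.v *)
Require Import Defs.
From Stdlib Require Import Setoid.

Lemma leR {C : PSMC} {X Y} (f : hom C X Y) : le f f. Proof. apply le_refl. Qed.
Lemma leT {C : PSMC} {X Y} (f g h : hom C X Y) : le f g -> le g h -> le f h.
Proof. apply le_trans. Qed.
Lemma leA {C : PSMC} {X Y} (f g : hom C X Y) : le f g -> le g f -> f = g.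
Proof. apply le_antisym. Qed.
Lemma lecl {C : PSMC} {X Y Z} (f f' : hom C X Y) (g : hom C Y Z) :
  le f f' -> le (f ;; g) (f' ;; g).
Proof. intros; apply comp_mono; auto using leR. Qed.
Lemma lecr {C : PSMC} {X Y Z} (f : hom C X Y) (g g' : hom C Y Z) :
  le g g' -> le (f ;; g) (f ;; g').
Proof. intros; apply comp_mono; auto using leR. Qed.
Lemma letl {C : PSMC} {X Y X' Y'} (f f' : hom C X Y) (g : hom C X' Y') :
  le f f' -> le (f ** g) (f' ** g).
Proof. intros; apply tensh_mono; auto using leR. Qed.
Lemma letr {C : PSMC} {X Y X' Y'} (f : hom C X Y) (g g' : hom C X' Y') :
  le g g' -> le (f ** g) (f ** g').
Proof. intros; apply tensh_mono; auto using leR. Qed.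

Ltac ra := repeat rewrite comp_assoc.

Lemma tc {C : PSMC} {X Y Z X' Y' Z'} (f : hom C X Y) (g : hom C Y Z)
  (f' : hom C X' Y') (g' : hom C Y' Z') :
  (f ** f') ;; (g ** g') = (f ;; g) ** (f' ;; g').
Proof. symmetry; apply tensh_comp. Qed.

Lemma tc' {C : PSMC} {X Y Z X' Y' Z' W} (f : hom C X Y) (g : hom C Y Z)
  (f' : hom C X' Y') (g' : hom C Y' Z') (k : hom C (Z (x) Z') W) :
  (f ** f') ;; ((g ** g') ;; k) = ((f ;; g) ** (f' ;; g')) ;; k.
Proof. rewrite <- comp_assoc, tc; reflexivity. Qed.

Lemma swap_t {C : PSMC} {X Y X' Y'} (f : hom C X Y) (g : hom C X' Y') :
  (f ** idm X') ;; (idm Y ** g) = (idm X ** g) ;; (f ** idm Y').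
Proof. rewrite !tc, !comp_idl, !comp_idr; reflexivity. Qed.

Lemma runit_inv_nat {C : PSMC} {X Y} (f : hom C X Y) :
  f ;; runit_inv Y = runit_inv X ;; (f ** idm unit).
Proof.
  rewrite <- (comp_idr _ _ _ (runit_inv X ;; (f ** idm unit))).
  rewrite <- (runit_iso1 _ Y). rewrite <- comp_assoc.
  rewrite (comp_assoc _ _ _ _ _ (runit_inv X)), runit_nat.
  rewrite <- comp_assoc, runit_iso2, comp_idl. reflexivity.
Qed.

Lemma lunit_inv_nat {C : PSMC} {X Y} (f : hom C X Y) :
  f ;; lunit_inv Y = lunit_inv X ;; (idm unit ** f).
Proof.
  rewrite <- (comp_idr _ _ _ (lunit_inv X ;; (idm unit ** f))).
  rewrite <- (lunit_iso1 _ Y). rewrite <- comp_assoc.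
  rewrite (comp_assoc _ _ _ _ _ (lunit_inv X)), lunit_nat.
  rewrite <- comp_assoc, lunit_iso2, comp_idl. reflexivity.
Qed.

Lemma assoc_inv_nat {C : PSMC} {X Y Z X' Y' Z'} (f : hom C X X') (g : hom C Y Y') (h : hom C Z Z') :
  (f ** (g ** h)) ;; assoc_inv X' Y' Z' = assoc_inv X Y Z ;; ((f ** g) ** h).
Proof.
  rewrite <- (comp_idl _ _ _ ((f ** (g ** h)) ;; assoc_inv X' Y' Z')).
  rewrite <- (assoc_iso2 _ X Y Z).
  rewrite (comp_assoc _ _ _ _ _ (assoc_inv X Y Z)).
  rewrite <- (comp_assoc _ _ _ _ _ (assoc X Y Z)).
  rewrite <- assoc_nat. rewrite !comp_assoc, assoc_iso1, comp_idr. reflexivity.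
Qed.

Lemma tsl {C : PSMC} {A B D X : ob C} (f : hom C A B) (g : hom C B D) :
  (f ;; g) ** idm X = (f ** idm X) ;; (g ** idm X).
Proof. rewrite tc, comp_idl; reflexivity. Qed.
Lemma tsr {C : PSMC} {A B D X : ob C} (f : hom C A B) (g : hom C B D) :
  idm X ** (f ;; g) = (idm X ** f) ;; (idm X ** g).
Proof. rewrite tc, comp_idl; reflexivity. Qed.
Lemma tfg {C : PSMC} {X Y X' Y'} (f : hom C X Y) (g : hom C X' Y') :
  f ** g = (f ** idm X') ;; (idm Y ** g).
Proof. rewrite tc, comp_idl, comp_idr; reflexivity. Qed.
Lemma tgf {C : PSMC} {X Y X' Y'} (f : hom C X Y) (g : hom C X' Y') :
  f ** g = (idm X ** g) ;; (f ** idm Y').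
Proof. rewrite tc, comp_idl, comp_idr; reflexivity. Qed.

Lemma cont {C : PSMC} {X Y Y' Z W : ob C} {a : hom C X Y} {b : hom C Y Z} {c : hom C X Y'} {d : hom C Y' Z}
  (e : a ;; b = c ;; d) (k : hom C Z W) : a ;; (b ;; k) = c ;; (d ;; k).
Proof. rewrite <- !comp_assoc, e; reflexivity. Qed.

Ltac crw e := first [rewrite (cont e) | rewrite e].
Ltac crwb e := first [rewrite <- (cont e) | rewrite <- e].

Lemma cont1 {C : PSMC} {X Y Z W : ob C} {a : hom C X Y} {b : hom C Y Z} {c : hom C X Z}
  (e : a ;; b = c) (k : hom C Z W) : a ;; (b ;; k) = c ;; k.
Proof. rewrite <- comp_assoc, e; reflexivity. Qed.

Definition Gen2 {C : PSMC} {Y X W : ob C} (Q : hom C unit (X (x) W)) (P : hom C (Y (x) X) unit) : hom C Y W :=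
 runit_inv Y ;; (idm Y ** Q) ;; assoc_inv Y X W ;; (P ** idm W) ;; lunit W.

Lemma G_left {C : PSMC} {Y' Y X W : ob C} (T : hom C Y' Y) (Q : hom C unit (X (x) W)) (P : hom C (Y (x) X) unit) :
  T ;; Gen2 Q P = Gen2 Q ((T ** idm X) ;; P).
Proof.
  unfold Gen2. rewrite tsl. ra.
  crwb (assoc_inv_nat T (idm X) (idm W)). rewrite tensh_id.
  crwb (swap_t T Q). crwb (runit_inv_nat T). reflexivity.
Qed.

Lemma G_right {C : PSMC} {Y X W W' : ob C} (Q : hom C unit (X (x) W)) (P : hom C (Y (x) X) unit) (S : hom C W W') :
  Gen2 Q P ;; S = Gen2 (Q ;; (idm X ** S)) P.
Proof.
  unfold Gen2. rewrite tsr. ra.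
  rewrite <- lunit_nat. crw (swap_t P S).
  rewrite <- (tensh_id _ Y X). crwb (assoc_inv_nat (idm Y) (idm X) S). reflexivity.
Qed.

Lemma G_mid {C : PSMC} {Y X X' W : ob C} (Q : hom C unit (X (x) W)) (h : hom C X X') (P : hom C (Y (x) X') unit) :
  Gen2 (Q ;; (h ** idm W)) P = Gen2 Q ((idm Y ** h) ;; P).
Proof.
  unfold Gen2. rewrite tsr, tsl. ra.
  crw (assoc_inv_nat (idm Y) h (idm W)). reflexivity.
Qed.

Lemma G_mono {C : PSMC} {Y X W : ob C} (Q Q' : hom C unit (X (x) W)) (P P' : hom C (Y (x) X) unit) :
  le Q Q' -> le P P' -> le (Gen2 Q P) (Gen2 Q' P').
Proof.
  intros. unfold Gen2. apply lecl. apply comp_mono; [ apply lecl, lecr, letr; auto | apply letl; auto ].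
Qed.

Definition eta {C : CartBicat} (X : ob C) : hom C unit (X (x) X) := codisc X ;; copy X.
Definition eps {C : CartBicat} (X : ob C) : hom C (X (x) X) unit := cocopy X ;; disc X.

Lemma conv_Gen {C : CartBicat} {X Y : ob C} (c : hom C X Y) :
  converse c = Gen2 (eta X) ((idm Y ** c) ;; eps Y).
Proof. unfold converse, Gen2, eta, eps. rewrite !tsl. ra. reflexivity. Qed.

Lemma Gen_id {C : CartBicat} (X : ob C) : Gen2 (eta X) (eps X) = idm X.
Proof.
  unfold Gen2, eta, eps. rewrite tsr, tsl. ra.
  assert (F := frobenius2 C X). ra.
  transitivity (runit_inv X ;; (idm X ** codisc X) ;; (cocopy X ;; copy X) ;; (disc X ** idm X) ;; lunit X).
  { rewrite <- F. ra. reflexivity. }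
  rewrite <- (comp_assoc _ _ _ _ _ _ (cocopy X)), cocopy_unitr, comp_idl.
  ra. rewrite <- comp_assoc. apply copy_counitl.
Qed.

Lemma conv_left {C : CartBicat} {X Y Y' : ob C} (T : hom C Y' Y) (c : hom C X Y) :
  T ;; converse c = Gen2 (eta X) ((T ** c) ;; eps Y).
Proof. rewrite conv_Gen, G_left. rewrite <- comp_assoc, <- tfg. reflexivity. Qed.

Lemma conv_mono {C : CartBicat} {X Y : ob C} (c d : hom C X Y) :
  le c d -> le (converse c) (converse d).
Proof. intros. rewrite !conv_Gen. apply G_mono. apply leR. apply lecl, letr; auto. Qed.

Lemma top_le {C : CartBicat} {X : ob C} (c : hom C X unit) : le c (disc X).
Proof.
  rewrite <- (comp_idr _ _ _ c). rewrite <- (disc_unit C). apply lax_disc.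
Qed.

Lemma codisc_le {C : CartBicat} {X Y : ob C} (c : hom C X Y) : le (codisc X ;; c) (codisc Y).
Proof.
  eapply leT. apply lecr. rewrite <- (comp_idr _ _ _ c) at 1. apply lecr, adj_disc_unit.
  rewrite <- (comp_assoc _ _ _ _ _ c), <- comp_assoc.
  eapply leT. apply lecl, lecr, lax_disc.
  rewrite <- (comp_idl _ _ _ (codisc Y)) at 2. apply lecl, adj_disc_counit.
Qed.

Lemma core {C : CartBicat} {X Y : ob C} (T : hom C X Y) :
  le (disc X) (T ;; disc Y) -> le (eps X) ((T ** T) ;; eps Y).
Proof.
  intros H. unfold eps. eapply leT. apply lecr, H.
  replace (T ;; disc Y) with (T ;; copy Y ;; cocopy Y ;; disc Y)
    by (ra; rewrite <- (comp_assoc _ _ _ _ _ (copy Y)), special, comp_idl; reflexivity).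
  eapply leT. apply lecr, lecl, lecl, lax_copy.
  ra. rewrite <- comp_assoc.
  eapply leT; [apply lecl, adj_copy_counit | rewrite comp_idl; apply leR].
Qed.

Lemma total_unit {C : CartBicat} {X Y : ob C} (T c : hom C X Y) :
  le (disc X) (T ;; disc Y) -> le T c -> le (idm X) (T ;; converse c).
Proof.
  intros H Hc. rewrite <- (Gen_id X). rewrite conv_left. apply G_mono. apply leR.
  eapply leT; [apply (core T H) | ]. apply lecl, letr, Hc.
Qed.

Lemma map_counit {C : CartBicat} {X Y : ob C} (f : hom C X Y) :
  is_map f -> le (converse f ;; f) (idm Y).
Proof.
  intros [Hc Hd]. rewrite conv_Gen, G_right. rewrite <- G_mid.
  apply (leT _ (Gen2 (eta Y) (eps Y))); [| rewrite Gen_id; apply leR].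
  apply G_mono. 2: apply leR.
  unfold eta. ra. rewrite tc, comp_idl, comp_idr. rewrite <- Hc.
  rewrite <- comp_assoc. apply lecl, codisc_le.
Qed.

Lemma map_unit {C : CartBicat} {X Y : ob C} (f : hom C X Y) :
  is_map f -> le (idm X) (f ;; converse f).
Proof.
  intros [Hc Hd]. apply total_unit. rewrite Hd. apply leR. apply leR.
Qed.

Lemma adj_map {C : CartBicat} {X Y : ob C} (R : hom C X Y) (S : hom C Y X) :
  le (idm X) (R ;; S) -> le (S ;; R) (idm Y) -> is_map R.
Proof.
  intros H1 H2. split; apply leA.
  - apply lax_copy.
  - eapply leT. rewrite <- (comp_idl _ _ _ (copy X ;; (R ** R))) at 1. apply lecl, H1.
    ra. eapply leT. apply lecr. rewrite <- comp_assoc. apply lecl, lax_copy.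
    ra. rewrite tc. apply lecr.
    eapply leT; [apply lecr; apply (tensh_mono _ _ _ _ _ _ _ _ _ H2 H2) | rewrite tensh_id, comp_idr; apply leR].
  - apply lax_disc.
  - eapply leT. rewrite <- (comp_idl _ _ _ (disc X)) at 1. apply lecl, H1.
    ra. apply lecr, lax_disc.
Qed.

Lemma map_comp {C : CartBicat} {X Y Z : ob C} (f : hom C X Y) (g : hom C Y Z) :
  is_map f -> is_map g -> is_map (f ;; g).
Proof.
  intros [F1 F2] [G1 G2]. split.
  - ra. rewrite G1. rewrite <- comp_assoc, F1. ra. rewrite tc. reflexivity.
  - ra. rewrite G2. apply F2.
Qed.

Lemma iso_map {C : CartBicat} {X Y : ob C} (u : hom C X Y) (v : hom C Y X) :
  u ;; v = idm X -> v ;; u = idm Y -> is_map u.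
Proof. intros H1 H2. apply (adj_map u v); [rewrite H1 | rewrite H2]; apply leR. Qed.

Lemma copy_disc_r {C : CartBicat} (X : ob C) : copy X ;; (idm X ** disc X) = runit_inv X.
Proof.
  rewrite <- (comp_idr _ _ _ (copy X ;; _)). rewrite <- (runit_iso1 _ X).
  rewrite <- comp_assoc, copy_counitr. apply comp_idl.
Qed.
Lemma copy_disc_l {C : CartBicat} (X : ob C) : copy X ;; (disc X ** idm X) = lunit_inv X.
Proof.
  rewrite <- (comp_idr _ _ _ (copy X ;; _)). rewrite <- (lunit_iso1 _ X).
  rewrite <- comp_assoc, copy_counitl. apply comp_idl.
Qed.

Lemma disc_map {C : CartBicat} (X : ob C) : is_map (disc X).
Proof.
  split.
  - rewrite copy_unit, lunit_inv_nat, (tfg (disc X) (disc X)), <- comp_assoc, copy_disc_l.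
    reflexivity.
  - rewrite disc_unit, comp_idr. reflexivity.
Qed.

Definition mid4 {C : PSMC} (A B D E : ob C) : hom C ((A (x) B) (x) (D (x) E)) ((A (x) D) (x) (B (x) E)) :=
  assoc A B (D (x) E)
  ;; (idm A ** assoc_inv B D E)
  ;; (idm A ** (sym B D ** idm E))
  ;; (idm A ** assoc D B E)
  ;; assoc_inv A D (B (x) E).

Lemma mid_mid4 {C : PSMC} (X Y : ob C) : mid C X Y = mid4 X X Y Y.
Proof. reflexivity. Qed.

Lemma tr_nat {C : PSMC} {A A' B B' D D' : ob C} (a : hom C A A') (x : hom C B B') (y : hom C B' D)
  (y' : hom C B D') (x' : hom C D' D) :
  x ;; y = y' ;; x' -> (a ** x) ;; (idm A' ** y) = (idm A ** y') ;; (a ** x').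
Proof. intros H. rewrite !tc, comp_idl, comp_idr, H. reflexivity. Qed.

Lemma symt_nat {C : PSMC} {B B' D D' E E' : ob C} (b : hom C B B') (d : hom C D D') (e : hom C E E') :
  ((b ** d) ** e) ;; (sym B' D' ** idm E') = (sym B D ** idm E) ;; ((d ** b) ** e).
Proof. rewrite !tc, comp_idl, comp_idr, sym_nat. reflexivity. Qed.

Lemma mid4_nat {C : PSMC} {A B D E A' B' D' E' : ob C} (a : hom C A A') (b : hom C B B')
  (d : hom C D D') (e : hom C E E') :
  ((a ** b) ** (d ** e)) ;; mid4 A' B' D' E' = mid4 A B D E ;; ((a ** d) ** (b ** e)).
Proof.
  unfold mid4. ra.
  crw (assoc_nat _ _ _ _ _ _ _ a b (d ** e)).
  crw (tr_nat a _ _ _ _ (assoc_inv_nat b d e)).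
  crw (tr_nat a _ _ _ _ (symt_nat b d e)).
  crw (tr_nat a _ _ _ _ (assoc_nat _ _ _ _ _ _ _ d b e)).
  rewrite assoc_inv_nat. reflexivity.
Qed.

Lemma tensor_map {C : CartBicat} {X Y X' Y' : ob C} (f : hom C X Y) (g : hom C X' Y') :
  is_map f -> is_map g -> is_map (f ** g).
Proof.
  intros [F1 F2] [G1 G2]. split.
  - rewrite !copy_tens, !mid_mid4. rewrite <- comp_assoc, tc, F1, G1.
    rewrite <- tc. ra. rewrite mid4_nat. reflexivity.
  - rewrite !disc_tens. rewrite <- comp_assoc, tc, F2, G2. reflexivity.
Qed.

Lemma sym_II {C : CartBicat} : sym (unit (p:=C)) unit = idm _.
Proof.
  assert (H := copy_comm C unit). rewrite copy_unit in H.
  rewrite <- (comp_idl _ _ _ (sym _ _)). rewrite <- (lunit_iso1 _ unit).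
  rewrite comp_assoc, H. reflexivity.
Qed.

Lemma map_idm {C : CartBicat} (X : ob C) : is_map (idm X).
Proof. split; rewrite ?tensh_id, comp_idl, ?comp_idr; reflexivity. Qed.

Definition p1 {C : CartBicat} (A B : ob C) : hom C (A (x) B) A := (idm A ** disc B) ;; runit A.
Definition p2 {C : CartBicat} (A B : ob C) : hom C (A (x) B) B := (disc A ** idm B) ;; lunit B.

Lemma p1_map {C : CartBicat} (A B : ob C) : is_map (p1 A B).
Proof.
  apply map_comp. apply tensor_map. apply map_idm.
  apply disc_map. apply (iso_map _ (runit_inv A)); apply runit_iso1 || apply runit_iso2.
Qed.
Lemma p2_map {C : CartBicat} (A B : ob C) : is_map (p2 A B).
Proof.
  apply map_comp. apply tensor_map. apply disc_map.
  apply map_idm.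
  apply (iso_map _ (lunit_inv B)); apply lunit_iso1 || apply lunit_iso2.
Qed.

Lemma mid4_II {C : CartBicat} (A B : ob C) : mid4 A unit unit B = idm _.
Proof.
  unfold mid4. rewrite sym_II, !tensh_id, comp_idr.
  ra. rewrite (cont1 (tc (idm A) (idm A) (assoc_inv unit unit B) (assoc unit unit B))), assoc_iso2, comp_idl, !tensh_id, comp_idl.
  apply assoc_iso1.
Qed.

Lemma pair_id {C : CartBicat} (A B : ob C) : copy (A (x) B) ;; (p1 A B ** p2 A B) = idm _.
Proof.
  rewrite copy_tens, mid_mid4. unfold p1, p2. rewrite <- tc. ra.
  rewrite <- (comp_assoc _ _ _ _ _ (mid4 _ _ _ _)), <- mid4_nat, mid4_II, comp_idr.
  rewrite <- comp_assoc, tc, copy_disc_r, copy_disc_l, tc, runit_iso2, lunit_iso2.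
  apply tensh_id.
Qed.

Lemma discrete {C : CartBicat} {X Y : ob C} (h f : hom C X Y) :
  is_map h -> is_map f -> le h f -> h = f.
Proof.
  intros Hh Hf H. apply leA; auto.
  eapply leT. rewrite <- (comp_idl _ _ _ f) at 1. apply lecl, (map_unit h Hh).
  ra. eapply leT. apply lecr, lecl, conv_mono, H.
  rewrite <- (comp_idr _ _ _ h) at 2. apply lecr, map_counit, Hf.
Qed.

Lemma top_of {C : CartBicat} {Y : ob C} (a : hom C Y unit) : le (disc Y) a -> is_top a.
Proof. intros H c. eapply leT. apply top_le. exact H. Qed.

Lemma map_top {C : CartBicat} {Y X : ob C} (m : hom C Y X) (a : hom C X unit) :
  is_map m -> is_top a -> is_top (m ;; a).
Proof.
  intros [_ Hd] Ha. apply top_of. rewrite <- Hd. apply lecr, Ha.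
Qed.

Lemma tab_comp {C : CartBicat} {X Xa : ob C} (a : hom C X unit) (i : hom C Xa X) :
  is_map i -> i ;; converse i = idm Xa -> converse i ;; disc Xa = a -> is_comprehension a i.
Proof.
  intros Hi Hii Ha. split; [exact Hi|]. split.
  { apply top_of. rewrite <- Ha, <- comp_assoc, Hii, comp_idl. apply leR. }
  intros Y f Hf Htop. split.
  - exists (f ;; converse i).
    assert (Hg : is_map (f ;; converse i)).
    { apply (adj_map _ (i ;; converse f)).
      - rewrite <- comp_assoc. apply total_unit.
        + ra. destruct Hi as [_ Hid]. rewrite Hid, Ha. apply Htop.
        + ra. rewrite <- (comp_idr _ _ _ f) at 2. apply lecr, map_counit, Hi.
      - ra. rewrite <- (comp_assoc _ _ _ _ _ (converse f)).
        eapply leT. apply lecr, lecl, map_counit, Hf.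
        rewrite comp_idl, Hii. apply leR. }
    split; [exact Hg|]. symmetry. apply discrete.
    + apply map_comp; auto.
    + exact Hf.
    + ra. rewrite <- (comp_idr _ _ _ f) at 2. apply lecr, map_counit, Hi.
  - intros g g' _ _ E1 E2.
    rewrite <- (comp_idr _ _ _ g), <- (comp_idr _ _ _ g'), <- Hii, <- !comp_assoc, <- E1, <- E2.
    reflexivity.
Qed.

Lemma fc_to_comp {C : CartBicat} : functionally_complete C -> has_full_comprehensions C.
Proof.
  intros FC. split.
  - intros X a. destruct (FC X a) as (Xa & i & Hi & Hii & Ha).
    exists Xa, i. apply tab_comp; auto.
  - intros X a b Xa Xb i j Ci Cj (g & Hg & Eg).
    destruct (FC X a) as (Xt & t & Ht & Htt & Hta).
    destruct (FC X b) as (Xs & s & Hs & Hss & Hsb).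
    assert (Ct : is_comprehension a t) by (apply tab_comp; auto).
    assert (Cs : is_comprehension b s) by (apply tab_comp; auto).
    destruct Ci as (Hi & Hia & Ui).
    destruct (Ui _ t Ht (proj1 (proj2 Ct))) as [(h' & Hh' & Eh') _].
    destruct Cj as (Hj & Hjb & _).
    assert (Ttb : is_top (t ;; b)).
    { rewrite Eh', Eg. ra. rewrite <- comp_assoc. apply map_top; auto. apply map_comp; auto. }
    destruct Cs as (_ & _ & Us).
    destruct (Us _ t Ht Ttb) as [(k & Hk & Ek) _].
    rewrite <- Hta, <- Hsb.
    destruct Hk as [_ Hkd].
    assert (E : disc Xt = k ;; s ;; converse s ;; disc Xs)
      by (ra; rewrite (cont1 Hss), comp_idl, Hkd; reflexivity).
    rewrite E, <- Ek. ra. rewrite <- comp_assoc.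
    eapply leT. apply lecl, map_counit, Ht. rewrite comp_idl. apply leR.
Qed.

Lemma meet_le_l {C : CartBicat} {K X : ob C} (u v : hom C K X) :
  is_map v -> le (copy K ;; (u ** v) ;; cocopy X) u.
Proof.
  intros [_ Hvd].
  rewrite <- (comp_idr _ _ _ (copy K ;; (u ** v) ;; cocopy X)).
  rewrite <- (copy_counitr C X). ra.
  eapply leT. apply lecr, lecr. rewrite <- comp_assoc. apply lecl, adj_copy_counit.
  rewrite comp_idl. rewrite (cont1 (tc u (idm X) v (disc X))), comp_idr, Hvd.
  rewrite tgf. ra. rewrite runit_nat. rewrite (cont1 (copy_disc_r K)), (cont1 (runit_iso2 _ K)), comp_idl. apply leR.
Qed.

Lemma meet_le_r {C : CartBicat} {K X : ob C} (u v : hom C K X) :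
  is_map u -> le (copy K ;; (u ** v) ;; cocopy X) v.
Proof.
  intros [_ Hud].
  rewrite <- (comp_idr _ _ _ (copy K ;; (u ** v) ;; cocopy X)).
  rewrite <- (copy_counitl C X). ra.
  eapply leT. apply lecr, lecr. rewrite <- comp_assoc. apply lecl, adj_copy_counit.
  rewrite comp_idl. rewrite (cont1 (tc u (disc X) v (idm X))), comp_idr, Hud.
  rewrite tfg. ra. rewrite lunit_nat. rewrite (cont1 (copy_disc_l K)), (cont1 (lunit_iso2 _ K)), comp_idl. apply leR.
Qed.

Lemma comp_to_fc {C : CartBicat} : has_full_comprehensions C -> functionally_complete C.
Proof.
  intros [Ex Full] X r.
  destruct (Ex X r) as (Xr & i & Ci).
  pose proof Ci as (Hi & Hir & Ui).
  assert (Dir : le (disc Xr) (i ;; r)) by apply Hir.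
  exists Xr, i. split; [exact Hi|]. split.
  - apply leA; [| apply map_unit, Hi].
    rewrite conv_left. apply (leT _ (Gen2 (eta Xr) (eps Xr))); [| rewrite Gen_id; apply leR].
    apply G_mono; [apply leR|].
    set (kap := (i ** i) ;; eps X).
    destruct (Ex _ kap) as (K & k & Ck).
    destruct (Ex _ (eps Xr)) as (D & d & Cd).
    pose proof Ck as (Hk & Hkk & _).
    set (g := k ;; p1 Xr Xr). set (g' := k ;; p2 Xr Xr).
    assert (Hg : is_map g) by (apply map_comp; auto using p1_map).
    assert (Hg' : is_map g') by (apply map_comp; auto using p2_map).
    assert (Ek : k = copy K ;; (g ** g')).
    { unfold g, g'. rewrite <- tc, <- comp_assoc. destruct Hk as [Hkc _]. rewrite <- Hkc.
      ra. rewrite pair_id, comp_idr. reflexivity. }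
    set (u := g ;; i). set (v := g' ;; i).
    assert (Hu : is_map u) by (apply map_comp; auto).
    assert (Hv : is_map v) by (apply map_comp; auto).
    set (T := copy K ;; (u ** v) ;; cocopy X).
    assert (TD : le (disc K) (T ;; disc X)).
    { eapply leT. apply (Hkk (disc K)). unfold kap, T, eps, u, v. rewrite Ek.
      rewrite <- tc. ra. apply leR. }
    assert (Euv : u = v).
    { apply discrete; auto.
      eapply leT. rewrite <- (comp_idl _ _ _ u) at 1. apply lecl, (total_unit T T TD (leR T)).
      ra. eapply leT. apply lecr, lecl, conv_mono, (meet_le_l u v Hv).
      eapply leT. apply lecr, map_counit, Hu.
      rewrite comp_idr. apply meet_le_r, Hu. }
    assert (Egg : g = g').
    { assert (Tu : is_top (u ;; r)) by (unfold u; ra; apply map_top; auto).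
      destruct (Ui _ u Hu Tu) as [_ Uniq]. apply (Uniq g g' Hg Hg'); auto. }
    assert (Tk : is_top (k ;; eps Xr)).
    { apply top_of. rewrite Ek, <- Egg. destruct Hg as [Hgc Hgd].
      rewrite <- Hgc. unfold eps. ra. rewrite (cont1 (special C Xr)), comp_idl, Hgd. apply leR. }
    destruct Cd as (Hd & Hdt & Ud).
    destruct (Ud _ k Hk Tk) as [(h & Hh & Eh) _].
    apply (Full _ _ _ _ _ k d Ck (conj Hd (conj Hdt Ud))). exists h; auto.
  - destruct (Ex _ (converse i ;; disc Xr)) as (B & j & Cj).
    apply leA.
    + eapply leT. apply lecr, Dir. rewrite <- comp_assoc.
      eapply leT. apply lecl, map_counit, Hi. rewrite comp_idl. apply leR.
    + pose proof Cj as (Hj & _ & Uj).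
      assert (Ti : is_top (i ;; (converse i ;; disc Xr))).
      { apply top_of. rewrite <- comp_assoc. rewrite <- (comp_idl _ _ _ (disc Xr)) at 1.
        apply lecl, map_unit, Hi. }
      destruct (Uj _ i Hi Ti) as [(g & Hg & Eg) _].
      apply (Full _ _ _ _ _ i j Ci Cj). exists g; auto.
Qed.

Theorem theorem41 (C : CartBicat) :
  functionally_complete C <-> has_full_comprehensions C.
Proof. split; [apply fc_to_comp | apply comp_to_fc]. Qed.
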